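(* Let $\mathcal{T}=\{T(t,s):t\ge s\}$ be a linear evolution process in a Banach space $X$, $f:\mathbb{R}\times X\to X$ continuous and differentiable in $x$ with continuous derivative, and assume the mild solutions $y(t,s;y_s)=T(t,s)y_s+\int_s^tT(t,\tau)f(\tau,y(\tau,s;y_s))d\tau$ exist for all $t\ge s$, defining the nonlinear evolution process $\mathcal{S}_f$, $S_f(t,s)y_s=y(t,s;y_s)$. Let $\xi$ be a global solution of $\mathcal{S}_f$ which is nonuniform hyperbolic, i.e. its linearized process $\mathcal{L}_f$ admits a nonuniform exponential dichotomy with projections $\{Q(s)\}$, bound $K(s)=De^{\nu|s|}$ and exponent $\alpha>\nu$. Then: (a) every bounded global solution $\varphi$ of $\mathcal{S}_f$ satisfies $$\varphi(t)=\int_{-\infty}^{+\infty}G_f(t,\tau)\big[f(\tau,\varphi(\tau))-D_xf(\tau,\xi(\tau))\varphi(\tau)\big]d\tau,\quad t\in\mathbb{R},$$ where $G_f(t,s)=L_f(t,s)(Id_X-Q(s))$ for $t\ge s$ and $G_f(t,s)=-L_f(t,s)Q(s)$ for $t<s$; (b) if moreover $\xi$ is bounded and $$\rho(\epsilon):=\sup_{0<\|x\|\le\epsilon}\sup_{t\in\mathbb{R}}\frac{e^{\nu|t|}\|f(t,\xi(t)+x)-f(t,\xi(t))-D_xf(t,\xi(t))x\|}{\|x\|}\to0\ \text{ as }\epsilon\to0,$$ then $\xi$ is isolated in $C_b(\mathbb{R},X)$: there is $\epsilon>0$ such that $\xi$ is the only bounded global solution $\varphi$ of $\mathcal{S}_f$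 with $\sup_{t\in\mathbb{R}}\|\varphi(t)-\xi(t)\|\le\epsilon$.
   Context: A global solution of an evolution process $\mathcal{S}$ is a map $\xi:\mathbb{R}\to X$ with $S(t,s)\xi(s)=\xi(t)$ for all $t\ge s$. The linearized evolution process of $\mathcal{S}_f$ along $\xi$ is the linear evolution process $\mathcal{L}_f=\{L_f(t,s):t\ge s\}$ satisfying $L_f(t,s)=T(t,s)+\int_s^tT(t,\tau)D_xf(\tau,\xi(\tau))L_f(\tau,s)d\tau$; $\xi$ is a nonuniform hyperbolic solution if $\mathcal{L}_f$ admits a nonuniform exponential dichotomy. A linear evolution process $\{S(t,s)\}$ admits a nonuniform exponential dichotomy if there is a family of bounded projections $\{Q(t)\}_{t\in\mathbb{R}}$ with: (i) $Q(t)S(t,s)=S(t,s)Q(s)$ for $t\ge s$; (ii) $S(t,s)|_{R(Q(s))}:R(Q(s))\to R(Q(t))$ is an isomorphism for $t\ge s$, with inverse denoted $S(s,t)$; (iii) there are a continuous $K:\mathbb{R}\to[1,\infty)$ with $K(s)\le De^{\nu|s|}$ ($D\ge1$, $\nu\ge0$) and $\alpha>0$ with $\|S(t,s)(Id-Q(s))\|\le K(s)e^{-\alpha(t-s)}$ for $t\ge s$ and $\|S(t,s)Q(s)\|\le K(s)e^{\alpha(t-s)}$ for $t<s$. $C_b(\mathbb{R},X)$ denotes the bounded continuous functions $\mathbb{R}\to X$ with the sup norm. *)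

(* Defs.v *)
(* X is a real Banach space, i.e. a
   CompleteNormedModule over R_AbsRing; integrals of X-valued functions are
   Coquelicot's (Riemann) integrals is_RInt / improper integrals is_RInt_gen. *)
From Stdlib Require Import Reals.
From Coquelicot Require Export Coquelicot.
Open Scope R_scope.

Section Defs.
Context {X : CompleteNormedModule R_AbsRing}.

(* bounded linear operator on X (Coquelicot's is_linear includes the bound) *)
Definition bounded_linear (l : X -> X) : Prop := is_linear l.

(* Values S t s for t < s are irrelevant here. *)
Definition lin_evolution_process (S : R -> R -> X -> X) : Prop :=
  (forall t s, s <= t -> bounded_linear (S t s)) /\
  (forall t x, S t t x = x) /\
  (forall t tau s x, s <= tau -> tau <= t -> S t tau (S tau s x) = S t s x) /\
  (forall t s x eps, s <= t -> 0 < eps ->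
     exists delta, 0 < delta /\
       forall t' s' x', s' <= t' -> Rabs (t' - t) < delta -> Rabs (s' - s) < delta ->
         norm (minus x' x) < delta -> norm (minus (S t' s' x') (S t s x)) < eps).

Definition global_solution (S : R -> R -> X -> X) (xi : R -> X) : Prop :=
  forall t s, s <= t -> S t s (xi s) = xi t.

Definition bounded_fun (phi : R -> X) : Prop :=
  exists M, forall t, norm (phi t) <= M.

Definition bounded_projection (P : X -> X) : Prop :=
  bounded_linear P /\ forall x, P (P x) = P x.

(* Condition (ii): S(t,s) maps R(Q s) isomorphically onto R(Q t)
   (t >= s); its inverse R(Q t) -> R(Q s) is denoted S(s,t), i.e. it is the
   value of S s t on R(Q t). *)
Definition nonuniform_exp_dichotomy (S : R -> R -> X -> X) (Q : R -> X -> X)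
    (K : R -> R) (alpha : R) : Prop :=
  (forall t, bounded_projection (Q t)) /\
  (forall t s x, s <= t -> Q t (S t s x) = S t s (Q s x)) /\
  (forall t s, s <= t ->
     (forall x, S s t (S t s (Q s x)) = Q s x) /\
     (forall y, Q s (S s t (Q t y)) = S s t (Q t y)) /\
     (forall y, S t s (S s t (Q t y)) = Q t y)) /\
  (forall s, continuous K s) /\ (forall s, 1 <= K s) /\
  (exists D nu, 1 <= D /\ 0 <= nu /\ forall s, K s <= D * exp (nu * Rabs s)) /\
  0 < alpha /\
  (forall t s x, s <= t ->
     norm (S t s (minus x (Q s x))) <= K s * exp (- alpha * (t - s)) * norm x) /\
  (forall t s x, t < s ->
     norm (S t s (Q s x)) <= K s * exp (alpha * (t - s)) * norm x).

Definition green (L : R -> R -> X -> X) (Q : R -> X -> X) (t s : R) (x : X) : X :=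
  if Rle_dec s t then L t s (minus x (Q s x)) else opp (L t s (Q s x)).

Definition mild_process (T : R -> R -> X -> X) (f : R -> X -> X)
    (Sf : R -> R -> X -> X) : Prop :=
  forall s ys,
    (forall t, s <= t ->
       is_RInt (fun tau => T t tau (f tau (Sf tau s ys))) s t
               (minus (Sf t s ys) (T t s ys))) /\
    (forall t eps, s <= t -> 0 < eps -> exists delta, 0 < delta /\
       forall t', s <= t' -> Rabs (t' - t) < delta ->
         norm (minus (Sf t' s ys) (Sf t s ys)) < eps).

(* L is the linearized process of Sf along xi:
   L(t,s) = T(t,s) + \int_s^t T(t,tau) D_x f(tau, xi tau) L(tau,s) dtau
   (strongly, i.e. applied to every x). *)
Definition linearized_eq (T : R -> R -> X -> X) (Df : R -> X -> X -> X)
    (xi : R -> X) (L : R -> R -> X -> X) : Prop :=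
  forall t s x, s <= t ->
    is_RInt (fun tau => T t tau (Df tau (xi tau) (L tau s x))) s t
            (minus (L t s x) (T t s x)).

End Defs.

(* Main.v *)
Require Import Defs.
From Stdlib Require Import Reals Lra.
From Coquelicot Require Import Coquelicot.
Open Scope R_scope.

Section G. Context {G : NormedModule R_AbsRing}.
Lemma swap_mid (a b c d : G) : plus (plus a b) (plus c d) = plus (plus a c) (plus b d).
Proof. rewrite <- !plus_assoc. f_equal. rewrite !plus_assoc. f_equal. apply plus_comm. Qed.
Lemma mm_split (A B C E : G) : minus (minus A B) (minus C E) = minus (minus A C) (minus B E).
Proof. unfold minus. rewrite (@opp_plus G C), (@opp_plus G B), !(@opp_opp G). rewrite swap_mid. reflexivity. Qed.
Lemma mm_cancel (p q r : G) : minus (minus p q) (minus r q) = minus p r.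
Proof. rewrite mm_split, minus_eq_zero. apply minus_zero_r. Qed.
Lemma plus_minus_cancel (u v : G) : plus (minus u v) v = u.
Proof. unfold minus. rewrite <- plus_assoc, plus_opp_l. apply plus_zero_r. Qed.
Lemma minus_swap (p q r : G) : minus (minus p q) r = minus (minus p r) q.
Proof. unfold minus. rewrite <- !plus_assoc. f_equal. apply plus_comm. Qed.

Lemma opp_minus_distr (a b : G) : opp (minus a b) = minus (opp a) (opp b).
Proof. unfold minus at 1. rewrite (@opp_plus G). reflexivity. Qed.

Lemma split_sum (p q e1 e2 : G) :
  plus (minus (minus p q) e1) (opp (minus e2 q)) = minus (minus p e1) e2.
Proof.
  rewrite (@opp_minus G), minus_swap.
  assert (H : forall a b c : G, minus a c = plus (minus a b) (minus b c)).
  { intros a b c. unfold minus. rewrite <- plus_assoc. f_equal.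
    rewrite plus_assoc, plus_opp_l, plus_zero_l. reflexivity. }
  symmetry. apply H.
Qed.

Lemma minus_minus_minus_l (p e1 e2 : G) : minus (minus (minus p e1) e2) p = opp (plus e1 e2).
Proof.
  rewrite (@opp_plus G). unfold minus. rewrite <- !plus_assoc. rewrite plus_comm, <- !plus_assoc.
  rewrite plus_opp_l, plus_zero_r. reflexivity.
Qed.
End G.

Lemma Rmin_lip x y b : Rabs (Rmin x b - Rmin y b) <= Rabs (x - y).
Proof.
  unfold Rmin. destruct (Rle_dec x b), (Rle_dec y b);
  unfold Rabs; repeat destruct Rcase_abs; lra.
Qed.

Lemma small_exp C c eps : 0 < c -> 0 < eps -> 0 <= C ->
  exists A, forall a, a < A -> C * exp (c * a) < eps.
Proof.
  intros hc he hC.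
  exists (ln (eps / (C + 1)) / c). intros a ha.
  assert (h1 : c * a < ln (eps / (C + 1))).
  { apply Rmult_lt_compat_l with (r := c) in ha; [|lra].
    replace (c * (ln (eps / (C + 1)) / c)) with (ln (eps / (C + 1))) in ha by (field; lra). exact ha. }
  apply exp_increasing in h1. rewrite exp_ln in h1 by (apply Rdiv_lt_0_compat; lra).
  pose proof (exp_pos (c * a)).
  apply Rle_lt_trans with ((C + 1) * exp (c * a)). nra.
  apply Rlt_le_trans with ((C + 1) * (eps / (C + 1))).
  apply Rmult_lt_compat_l; lra. right; field; lra.
Qed.

Section Alg.
Context {X : NormedModule R_AbsRing}.

Lemma minus_trans (a b c : X) : minus a c = plus (minus a b) (minus b c).
Proof.
  unfold minus. rewrite <- plus_assoc. f_equal.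
  rewrite plus_assoc, plus_opp_l, plus_zero_l. reflexivity.
Qed.

Lemma eq_of_minus (a b : X) : minus a b = zero -> a = b.
Proof.
  intro H. apply (plus_reg_r (opp b)). rewrite plus_opp_r. exact H.
Qed.

Lemma norm_minus_sym (a b : X) : norm (minus a b) = norm (minus b a).
Proof. rewrite <- opp_minus, norm_opp. reflexivity. Qed.

Lemma norm_minus_self (a : X) : norm (minus a a) = 0.
Proof. rewrite minus_eq_zero. apply (@norm_zero R_AbsRing X). Qed.

Lemma eq_of_norm_small (a b : X) :
  (forall e, 0 < e -> norm (minus a b) <= e) -> a = b.
Proof.
  intro H. apply eq_of_minus, norm_eq_zero.
  pose proof (norm_ge_0 (minus a b)).
  destruct (Rle_lt_or_eq_dec _ _ H0) as [h|h]; [|auto].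
  specialize (H (norm (minus a b) / 2) ltac:(lra)). exfalso. lra.
Qed.

Lemma norm_le_plus (u v : X) : norm u <= norm v + norm (minus u v).
Proof.
  pose proof (norm_triangle v (minus u v)) as H.
  assert (E : plus v (minus u v) = u) by (rewrite plus_comm; apply plus_minus_cancel).
  rewrite E in H. lra.
Qed.

Lemma norm_mm (A B C E : X) :
  norm (minus (minus A B) (minus C E)) <= norm (minus A C) + norm (minus B E).
Proof.
  rewrite mm_split. unfold minus at 1. eapply Rle_trans. apply norm_triangle.
  rewrite norm_opp. lra.
Qed.

Lemma cont_of_eps (h : R -> X) t0 :
  (forall e, 0 < e -> exists d, 0 < d /\ forall t, Rabs (t - t0) < d -> norm (minus (h t) (h t0)) < e) ->
  continuous h t0.
Proof.
  intro H. unfold continuous.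
  apply (proj2 (@filterlim_locally_ball_norm R_AbsRing _ X _ (@filter_filter _ _ (locally_filter t0)) _ _)).
  intros eps. destruct (H eps (cond_pos eps)) as [d [hd Hd]].
  exists (mkposreal d hd). intros y hy. apply Hd. exact hy.
Qed.

Lemma norm_minus_via (P Q c : X) : norm (minus P Q) <= norm (minus P c) + norm (minus Q c).
Proof.
  rewrite <- (mm_cancel P c Q). unfold minus at 1. eapply Rle_trans. apply norm_triangle.
  rewrite norm_opp. lra.
Qed.

Lemma minus_plus_l (A B : X) : minus (plus A B) A = B.
Proof.
  rewrite (plus_comm A B). apply (plus_reg_r A). apply plus_minus_cancel.
Qed.

Lemma minus_minus_self (p I : X) : minus p (minus p I) = I.
Proof.
  apply (plus_reg_r (minus p I)). transitivity p. apply plus_minus_cancel.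
  rewrite plus_comm. symmetry. apply plus_minus_cancel.
Qed.

Lemma norm4 (p q u v : X) :
  norm (minus p q) <= norm (minus u v) + norm (minus u p) + norm (minus v q).
Proof.
  rewrite (minus_trans p u q), (minus_trans u v q).
  eapply Rle_trans. apply norm_triangle. rewrite (norm_minus_sym p u).
  eapply Rle_trans; [apply Rplus_le_compat_l; apply norm_triangle|]. lra.
Qed.

Lemma creep (F : R -> X) a b : a <= b ->
 (forall y, a <= y < b -> forall e, 0 < e -> exists d, 0 < d /\
     forall y', y < y' < y + d -> norm (minus (F y') (F y)) < e) ->
 (forall s, a < s <= b -> forall e, 0 < e -> exists d, 0 < d /\
     forall k, 0 < k < d -> a <= s - k -> norm (minus (F s) (F (s-k))) <= e * k) ->
 F a = F b.
Proof.
  intros hab RC LD. symmetry. apply eq_of_norm_small.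
  intros e0 he0.
  set (e := e0 / (b - a + 1)).
  assert (he : 0 < e) by (unfold e; apply Rdiv_lt_0_compat; lra).
  assert (key : norm (minus (F b) (F a)) <= e * (b - a)).
  2:{ apply Rle_trans with (1 := key).
      apply Rle_trans with (e * (b - a + 1)).
      apply Rmult_le_compat_l; [lra|lra]. right; unfold e; field; lra. }
  set (E := fun d => 0 <= d <= b - a /\ forall y, b - d <= y <= b ->
              norm (minus (F b) (F y)) <= e * (b - y)).
  assert (Hb : bound E) by (exists (b - a); intros d [[_ h] _]; exact h).
  assert (He : exists x, E x).
  { exists 0. split; [lra|]. intros y hy. replace y with b by lra.
    rewrite norm_minus_self. lra. }
  destruct (completeness E Hb He) as [m [Hub Hlub]].
  assert (E0 : E 0).
  { split; [lra|]. intros y hy. replace y with b by lra.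
    rewrite norm_minus_self. lra. }
  assert (m0 : 0 <= m) by (apply Hub; exact E0).
  assert (m1 : m <= b - a) by (apply Hlub; intros d [[_ h] _]; exact h).
  assert (Em : forall y, b - m < y <= b -> norm (minus (F b) (F y)) <= e * (b - y)).
  { intros y hy. destruct (Rle_lt_dec m (b - y)) as [h|h].
    - exfalso. lra.
    - destruct (Classical_Prop.classic (exists d, E d /\ b - y < d)) as [[d [[_ Hd] hd]]|hn].
      + apply Hd. lra.
      + exfalso. assert (m <= b - y).
        { apply Hlub. intros d Ed. apply Rnot_lt_le. intro hd. apply hn. exists d; auto. }
        lra. }
  assert (Em' : norm (minus (F b) (F (b - m))) <= e * m).
  { destruct (Req_dec m 0) as [z|nz].
    - rewrite z, Rminus_0_r, norm_minus_self. lra.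
    - apply Rnot_lt_le. intro hgt.
      set (gap := norm (minus (F b) (F (b - m))) - e * m).
      assert (hg : 0 < gap) by (unfold gap; lra).
      destruct (RC (b - m) ltac:(lra) (gap / 2) ltac:(lra)) as [d [hd Hd]].
      set (y' := b - m + Rmin d m / 2).
      assert (hmin : 0 < Rmin d m) by (apply Rmin_pos; lra).
      assert (hmin2 : Rmin d m <= d /\ Rmin d m <= m) by (split; [apply Rmin_l|apply Rmin_r]).
      assert (h1 := Em y' ltac:(unfold y'; lra)).
      assert (h2 := Hd y' ltac:(unfold y'; lra)).
      pose proof (norm_triangle (minus (F b) (F y')) (minus (F y') (F (b - m)))).
      rewrite <- minus_trans in H.
      unfold gap in *.
      assert (e * (b - y') <= e * m) by (apply Rmult_le_compat_l; unfold y'; lra).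
      lra. }
  assert (Emfull : forall y, b - m <= y <= b -> norm (minus (F b) (F y)) <= e * (b - y)).
  { intros y hy. destruct (Req_dec y (b - m)) as [->|ne].
    - replace (b - (b - m)) with m by ring. exact Em'.
    - apply Em. lra. }
  destruct (Rle_lt_dec (b - a) m) as [hm|hm].
  - replace a with (b - m) by lra. replace (b - (b - m)) with m by ring. exact Em'.
  - exfalso.
    destruct (LD (b - m) ltac:(lra) e he) as [d [hd Hd]].
    set (k := Rmin (d / 2) (b - a - m)).
    assert (hk : 0 < k) by (apply Rmin_pos; lra).
    assert (hk2 : k <= d / 2 /\ k <= b - a - m) by (split; [apply Rmin_l|apply Rmin_r]).
    assert (E (m + k)).
    { split; [lra|]. intros y hy.
      destruct (Rle_lt_dec (b - m) y) as [h|h].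
      - apply Emfull; lra.
      - pose proof (Hd (b - m - y) ltac:(lra) ltac:(lra)).
        replace (b - m - (b - m - y)) with y in H by ring.
        rewrite (minus_trans _ (F (b - m))).
        pose proof (norm_triangle (minus (F b) (F (b - m))) (minus (F (b - m)) (F y))).
        assert (e * (b - y) = e * m + e * (b - m - y)) by ring. eapply Rle_trans; [exact H0|]. lra. }
    pose proof (Hub _ H). lra.
Qed.
End Alg.


Section Lin.
Context {X Y : NormedModule R_AbsRing}.
Lemma lin_minus (l : X -> Y) (Hl : is_linear l) u v : l (minus u v) = minus (l u) (l v).
Proof. unfold minus. rewrite (linear_plus l Hl), (linear_opp l v Hl). reflexivity. Qed.

Lemma Riemann_sum_lin (l : X -> Y) (Hl : is_linear l) (f : R -> X) ptd :
  l (Riemann_sum f ptd) = Riemann_sum (fun x => l (f x)) ptd.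
Proof.
  induction ptd using SF_cons_ind.
  - simpl. apply (linear_zero l Hl).
  - rewrite !Riemann_sum_cons, (linear_plus l Hl), (linear_scal l Hl), IHptd.
    reflexivity.
Qed.

Lemma is_RInt_lin (l : X -> Y) (Hl : is_linear l) (f : R -> X) a b I :
  is_RInt f a b I -> is_RInt (fun x => l (f x)) a b (l I).
Proof.
  intro H. unfold is_RInt in *.
  eapply filterlim_ext.
  2: eapply filterlim_comp; [exact H| apply (linear_cont l I Hl)].
  intro ptd. simpl. rewrite (linear_scal l Hl), Riemann_sum_lin by exact Hl. reflexivity.
Qed.
End Lin.

Section Approx.
Context {X : NormedModule R_AbsRing}.
Lemma RInt_approx (w : R -> X) a b I c e : a <= b -> is_RInt w a b I ->
  (forall t, a <= t <= b -> norm (minus (w t) c) <= e) ->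
  norm (minus I (scal (b - a) c)) <= e * (b - a).
Proof.
  intros hab HI Hb.
  pose proof (is_RInt_minus _ _ _ _ _ _ HI (is_RInt_const a b c)) as H.
  pose proof (is_RInt_const a b e) as He.
  eapply Rle_trans. apply (norm_RInt_le _ (fun _ => e) a b _ _ hab Hb H He).
  right. unfold scal; simpl. unfold mult; simpl. ring.
Qed.
End Approx.


Lemma exp_int alpha t a b : 0 < alpha -> a < t < b ->
  exists I, is_RInt (fun tau => exp (- alpha * Rabs (t - tau))) a b I /\ I <= 2 / alpha.
Proof.
  intros ha h.
  assert (H1 : is_RInt (fun tau => exp (- alpha * (t - tau))) a t
     (minus (exp (- alpha * (t - t)) / alpha) (exp (- alpha * (t - a)) / alpha))).
  { apply (is_RInt_derive (fun tau => exp (- alpha * (t - tau)) / alpha)).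
    - intros x _. auto_derive; [exact I|]. replace (t + - x) with (t - x) by ring. field. lra.
    - intros x _. apply continuity_pt_filterlim. reg. }
  assert (H2 : is_RInt (fun tau => exp (- alpha * (tau - t))) t b
     (minus (- exp (- alpha * (b - t)) / alpha) (- exp (- alpha * (t - t)) / alpha))).
  { apply (is_RInt_derive (fun tau => - exp (- alpha * (tau - t)) / alpha)).
    - intros x _. auto_derive; [exact I|]. replace (x + - t) with (x - t) by ring. field. lra.
    - intros x _. apply continuity_pt_filterlim. reg. }
  assert (H1' : is_RInt (fun tau => exp (- alpha * Rabs (t - tau))) a t
     (minus (exp (- alpha * (t - t)) / alpha) (exp (- alpha * (t - a)) / alpha))).
  { eapply is_RInt_ext; [|exact H1]. intros x hx.
    rewrite Rmin_left in hx by lra. rewrite Rmax_right in hx by lra.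
    rewrite Rabs_right by lra. reflexivity. }
  assert (H2' : is_RInt (fun tau => exp (- alpha * Rabs (t - tau))) t b
     (minus (- exp (- alpha * (b - t)) / alpha) (- exp (- alpha * (t - t)) / alpha))).
  { eapply is_RInt_ext; [|exact H2]. intros x hx.
    rewrite Rmin_left in hx by lra. rewrite Rmax_right in hx by lra.
    rewrite Rabs_left by lra. f_equal. ring. }
  eexists. split. apply (is_RInt_Chasles _ _ _ _ _ _ H1' H2').
  unfold minus, plus, opp; simpl.
  replace (t - t) with 0 by ring. rewrite Rmult_0_r, exp_0.
  pose proof (exp_pos (- alpha * (t - a))). pose proof (exp_pos (- alpha * (b - t))).
  assert (0 < / alpha) by (apply Rinv_0_lt_compat; lra).
  unfold Rdiv. nra.
Qed.


Ltac rmin_facts := repeat match goal with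
  | |- context [Rmin ?a ?b] =>
  let r := fresh "r" in pose proof (Rmin_l a b); pose proof (Rmin_r a b); set (r := Rmin a b) in *
  | H : context [Rmin ?a ?b] |- _ =>
  let r := fresh "r" in pose proof (Rmin_l a b); pose proof (Rmin_r a b); set (r := Rmin a b) in * end.

Section Core.
Context {X : CompleteNormedModule R_AbsRing}
  (T : R -> R -> X -> X) (f : R -> X -> X) (Df : R -> X -> X -> X)
  (Sf : R -> R -> X -> X) (xi : R -> X) (Lf : R -> R -> X -> X).
Context (HT : lin_evolution_process T)
  (Hfc : forall t x, continuous (fun p : R * X => f (fst p) (snd p)) (t, x))
  (Hfd : forall t x, filterdiff (f t) (locally x) (Df t x))
  (HDc : forall t x eps, 0 < eps -> exists delta, 0 < delta /\
     forall t' x', Rabs (t' - t) < delta -> norm (minus x' x) < delta ->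
       forall h, norm (minus (Df t' x' h) (Df t x h)) <= eps * norm h)
  (Hmild : mild_process T f Sf) (Hxi : global_solution Sf xi)
  (HL : lin_evolution_process Lf) (HLeq : linearized_eq T Df xi Lf).


Lemma Df_lin t x : is_linear (Df t x).
Proof. exact (proj1 (Hfd t x)). Qed.

Lemma f_eps t x e : 0 < e -> exists d, 0 < d /\ forall tau y, Rabs (tau - t) < d ->
  norm (minus y x) < d -> norm (minus (f tau y) (f t x)) < e.
Proof.
  intro he. pose proof (Hfc t x) as H.
  unfold continuous in H.
  destruct (proj1 (@filterlim_locally_ball_norm R_AbsRing _ X _ (@filter_filter _ _ (locally_filter (t, x))) _ _) H (mkposreal e he)) as [d Hd].
  exists d. split; [apply cond_pos|]. intros tau y h1 h2.
  apply (Hd (tau, y)). split; [exact h1|]. apply norm_compat1. exact h2.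
Qed.

Lemma sol_cont (phi : R -> X) : global_solution Sf phi -> forall s e, 0 < e ->
  exists d, 0 < d /\ forall tau, Rabs (tau - s) < d -> norm (minus (phi tau) (phi s)) < e.
Proof.
  intros Hphi s e he.
  destruct (proj2 (Hmild (s - 1) (phi (s - 1))) s e ltac:(lra) he) as [d [hd Hd]].
  exists (Rmin d 1). split; [apply Rmin_pos; lra|]. intros tau htau.
  assert (h1 : Rmin d 1 <= d) by apply Rmin_l. assert (h2 : Rmin d 1 <= 1) by apply Rmin_r.
  assert (s - 1 <= tau) by (apply Rabs_def2 in htau; lra).
  rewrite <- (Hphi tau (s - 1)), <- (Hphi s (s - 1)) by lra.
  apply Hd; [lra|lra].
Qed.

Lemma incr (phi : R -> X) (Hphi : global_solution Sf phi) s sig : s <= sig ->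
  is_RInt (fun tau => T sig tau (minus (f tau (phi tau)) (Df tau (xi tau) (Lf tau s (phi s)))))
    s sig (minus (phi sig) (Lf sig s (phi s))).
Proof.
  intro hs.
  pose proof (proj1 (Hmild s (phi s)) sig hs) as H1.
  pose proof (HLeq sig s (phi s) hs) as H2.
  rewrite (Hphi sig s hs) in H1.
  pose proof (is_RInt_minus _ _ _ _ _ _ H1 H2) as H.
  rewrite (@mm_cancel X) in H.
  eapply is_RInt_ext; [|exact H].
  intros x hx. rewrite Rmin_left in hx by lra. rewrite Rmax_right in hx by lra.
  simpl. rewrite (Hphi x s) by lra.
  destruct HT as [Tlin _]. rewrite (lin_minus _ (Tlin sig x ltac:(lra))). reflexivity.
Qed.

Definition gfun (phi : R -> X) tau := minus (f tau (phi tau)) (Df tau (xi tau) (phi tau)).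

Lemma near (phi : R -> X) (Hphi : global_solution Sf phi) sig e : 0 < e ->
  exists d, 0 < d /\ forall k tau, 0 < k < d -> sig - k <= tau <= sig ->
    norm (minus (T sig tau (minus (f tau (phi tau)) (Df tau (xi tau) (Lf tau (sig - k) (phi (sig - k))))))
                (gfun phi sig)) <= e.
Proof.
  intro he.
  destruct HT as [_ [Tid [_ Tcont]]].
  destruct HL as [_ [Lid [_ Lcont]]].
  destruct (Tcont sig sig (gfun phi sig) e (Rle_refl _) he) as [d1 [hd1 Hd1]].
  rewrite Tid in Hd1.
  destruct (f_eps sig (phi sig) (d1 / 2) ltac:(lra)) as [d2 [hd2 Hd2]].
  destruct (sol_cont phi Hphi sig d2 hd2) as [d3 [hd3 Hd3]].
  destruct (linear_norm _ (Df_lin sig (xi sig))) as [M [hM HM]].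
  set (rho := Rmin 1 (d1 / (4 * M))).
  assert (hrho : 0 < rho) by (apply Rmin_pos; [lra| apply Rdiv_lt_0_compat; lra]).
  assert (hrho1 : rho <= 1) by apply Rmin_l.
  assert (hrho2 : rho <= d1 / (4 * M)) by apply Rmin_r.
  destruct (Lcont sig sig (phi sig) rho (Rle_refl _) hrho) as [d4 [hd4 Hd4]].
  rewrite Lid in Hd4.
  destruct (sol_cont phi Hphi sig d4 hd4) as [d5 [hd5 Hd5]].
  set (eta := d1 / (4 * (norm (phi sig) + 1))).
  assert (hnp := norm_ge_0 (phi sig)).
  assert (heta : 0 < eta) by (apply Rdiv_lt_0_compat; lra).
  destruct (HDc sig (xi sig) eta heta) as [d6 [hd6 Hd6]].
  destruct (sol_cont xi Hxi sig d6 hd6) as [d7 [hd7 Hd7]].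
  set (d := Rmin (Rmin (Rmin d1 d3) (Rmin d4 d5)) (Rmin d6 (Rmin d7 d2))).
  assert (hd : 0 < d) by (unfold d; repeat apply Rmin_pos; lra).
  assert (hdd : d <= d1 /\ d <= d3 /\ d <= d4 /\ d <= d5 /\ d <= d6 /\ d <= d7 /\ d <= d2).
  { clear -hd. unfold d in *. rmin_facts. lra. }
  exists d. split; [exact hd|]. intros k tau hk htau.
  assert (htd : Rabs (tau - sig) < d) by (apply Rabs_def1; lra).
  assert (hkd : Rabs (sig - k - sig) < d) by (apply Rabs_def1; lra).
  set (u := Lf tau (sig - k) (phi (sig - k))).
  assert (hu : norm (minus u (phi sig)) < rho).
  { apply Hd4; [lra| lra | lra |]. apply Hd5. lra. }
  assert (hu' : norm u <= norm (phi sig) + 1).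
  { eapply Rle_trans; [apply (norm_le_plus u (phi sig))|].
    apply Rplus_le_compat_l. apply Rlt_le, Rlt_le_trans with rho; [exact hu|lra]. }
  apply Rlt_le. apply Hd1; [lra| unfold Rminus; rewrite Rplus_opp_r, Rabs_R0; lra |lra|].
  unfold gfun. eapply Rle_lt_trans. apply (@norm_mm X).
  assert (hf : norm (minus (f tau (phi tau)) (f sig (phi sig))) < d1 / 2).
  { apply Hd2; [lra|]. apply Hd3. lra. }
  assert (hD : norm (minus (Df tau (xi tau) u) (Df sig (xi sig) (phi sig))) <= d1 / 2).
  { rewrite (@minus_trans X _ (Df sig (xi sig) u)).
    eapply Rle_trans. apply norm_triangle.
    rewrite <- (@lin_minus X X _ (Df_lin sig (xi sig))).
    pose proof (Hd6 tau (xi tau) ltac:(lra) (Hd7 tau ltac:(lra)) u) as h1.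
    pose proof (HM (minus u (phi sig))) as h2.
    assert (eta * norm u <= d1 / 4).
    { apply Rle_trans with (eta * (norm (phi sig) + 1)).
      apply Rmult_le_compat_l; lra. unfold eta. right. field. lra. }
    assert (M * norm (minus u (phi sig)) <= d1 / 4).
    { apply Rle_trans with (M * (d1 / (4 * M))).
      apply Rmult_le_compat_l; lra. right. field. lra. }
    apply Rle_trans with (d1/4 + d1/4); [apply Rplus_le_compat; [eapply Rle_trans; [exact h1|exact H] | eapply Rle_trans; [exact h2|exact H0]] | lra]. }
  apply Rlt_le_trans with (d1/2 + d1/2); [apply Rplus_lt_le_compat; [exact hf|exact hD] | lra].
Qed.

Lemma gcont (phi : R -> X) (Hphi : global_solution Sf phi) sig e : 0 < e ->
  exists d, 0 < d /\ forall tau, Rabs (tau - sig) < d ->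
    norm (minus (gfun phi tau) (gfun phi sig)) < e.
Proof.
  intro he.
  destruct (f_eps sig (phi sig) (e / 2) ltac:(lra)) as [d2 [hd2 Hd2]].
  destruct (sol_cont phi Hphi sig d2 hd2) as [d3 [hd3 Hd3]].
  destruct (linear_norm _ (Df_lin sig (xi sig))) as [M [hM HM]].
  assert (hnp := norm_ge_0 (phi sig)).
  set (eta := e / (8 * (norm (phi sig) + 1))).
  assert (heta : 0 < eta) by (apply Rdiv_lt_0_compat; lra).
  destruct (HDc sig (xi sig) eta heta) as [d6 [hd6 Hd6]].
  destruct (sol_cont xi Hxi sig d6 hd6) as [d7 [hd7 Hd7]].
  set (rho := Rmin 1 (e / (8 * M))).
  assert (hrho : 0 < rho) by (apply Rmin_pos; [lra| apply Rdiv_lt_0_compat; lra]).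
  assert (hrho1 : rho <= 1) by apply Rmin_l.
  assert (hrho2 : rho <= e / (8 * M)) by apply Rmin_r.
  destruct (sol_cont phi Hphi sig rho hrho) as [d5 [hd5 Hd5]].
  set (d := Rmin (Rmin d2 d3) (Rmin d5 (Rmin d7 d6))).
  assert (hd : 0 < d) by (unfold d; repeat apply Rmin_pos; lra).
  assert (hdd : d <= d2 /\ d <= d3 /\ d <= d5 /\ d <= d7 /\ d <= d6).
  { clear -hd. unfold d in *. rmin_facts. lra. }
  exists d. split; [exact hd|]. intros tau htau.
  unfold gfun. eapply Rle_lt_trans. apply (@norm_mm X).
  assert (hf : norm (minus (f tau (phi tau)) (f sig (phi sig))) < e / 2).
  { apply Hd2; [lra|]. apply Hd3. lra. }
  assert (hu : norm (minus (phi tau) (phi sig)) < rho) by (apply Hd5; lra).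
  assert (hu' : norm (phi tau) <= norm (phi sig) + 1).
  { eapply Rle_trans; [apply (norm_le_plus (phi tau) (phi sig))|].
    apply Rplus_le_compat_l. apply Rlt_le, Rlt_le_trans with rho; [exact hu|lra]. }
  assert (hD : norm (minus (Df tau (xi tau) (phi tau)) (Df sig (xi sig) (phi sig))) <= e / 4).
  { rewrite (@minus_trans X _ (Df sig (xi sig) (phi tau))).
    eapply Rle_trans. apply norm_triangle.
    rewrite <- (@lin_minus X X _ (Df_lin sig (xi sig))).
    pose proof (Hd6 tau (xi tau) ltac:(lra) (Hd7 tau ltac:(lra)) (phi tau)) as h1.
    pose proof (HM (minus (phi tau) (phi sig))) as h2.
    assert (eta * norm (phi tau) <= e / 8).
    { apply Rle_trans with (eta * (norm (phi sig) + 1)).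
      apply Rmult_le_compat_l; lra. unfold eta. right. field. lra. }
    assert (M * norm (minus (phi tau) (phi sig)) <= e / 8).
    { apply Rle_trans with (M * (e / (8 * M))).
      apply Rmult_le_compat_l. lra. apply Rlt_le, Rlt_le_trans with rho; [exact hu|lra].
      right. field. lra. }
    apply Rle_trans with (e/8 + e/8); [apply Rplus_le_compat; [eapply Rle_trans; [exact h1|exact H] | eapply Rle_trans; [exact h2|exact H0]] | lra]. }
  apply Rlt_le_trans with (e/2 + e/4); [apply Rplus_lt_le_compat; [exact hf|exact hD] | lra].
Qed.

Definition kk (phi : R -> X) (b tau : R) := Lf b (Rmin tau b) (gfun phi (Rmin tau b)).

Lemma kk_cont (phi : R -> X) (Hphi : global_solution Sf phi) b t0 e : 0 < e ->
  exists d, 0 < d /\ forall t, Rabs (t - t0) < d -> norm (minus (kk phi b t) (kk phi b t0)) < e.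
Proof.
  intro he. destruct HL as [_ [_ [_ Lcont]]].
  destruct (Lcont b (Rmin t0 b) (gfun phi (Rmin t0 b)) e (Rmin_r _ _) he) as [d1 [hd1 Hd1]].
  destruct (gcont phi Hphi (Rmin t0 b) d1 hd1) as [d2 [hd2 Hd2]].
  exists (Rmin d1 d2). split; [apply Rmin_pos; lra|]. intros t ht.
  assert (h1 : Rmin d1 d2 <= d1) by apply Rmin_l. assert (h2 : Rmin d1 d2 <= d2) by apply Rmin_r.
  pose proof (Rmin_lip t t0 b).
  unfold kk. apply Hd1.
  - apply Rmin_r.
  - unfold Rminus. rewrite Rplus_opp_r, Rabs_R0. lra.
  - lra.
  - apply Hd2. lra.
Qed.

Lemma kk_ex (phi : R -> X) (Hphi : global_solution Sf phi) b x y : ex_RInt (kk phi b) x y.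
Proof.
  apply ex_RInt_continuous. intros z _. apply (@cont_of_eps X). intros e he.
  exact (kk_cont phi Hphi b z e he).
Qed.

Lemma variation (phi : R -> X) (Hphi : global_solution Sf phi) a b : a <= b ->
  is_RInt (fun tau => Lf b tau (gfun phi tau)) a b (minus (phi b) (Lf b a (phi a))).
Proof.
  intro hab.
  destruct HL as [Llin [Lid [Lcoc Lcont]]].
  set (F := fun s => minus (Lf b s (phi s)) (RInt (kk phi b) a s)).
  assert (HF : F a = F b).
  { apply (@creep X F a b hab).
    - intros y hy e he.
      destruct (Lcont b y (phi y) (e/2) ltac:(lra) ltac:(lra)) as [d1 [hd1 Hd1]].
      destruct (sol_cont phi Hphi y d1 hd1) as [d2 [hd2 Hd2]].
      destruct (kk_cont phi Hphi b y 1 Rlt_0_1) as [d3 [hd3 Hd3]].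
      set (N := norm (kk phi b y)).
      assert (hN : 0 <= N) by apply norm_ge_0.
      set (d := Rmin (Rmin d1 d2) (Rmin d3 (Rmin (b - y) (e / (2 * (N + 1)))))).
      assert (hd : 0 < d).
      { unfold d. repeat apply Rmin_pos; try lra. apply Rdiv_lt_0_compat; lra. }
      assert (hdd : d <= d1 /\ d <= d2 /\ d <= d3 /\ d <= b - y /\ d <= e / (2 * (N + 1))).
      { clear -hd. unfold d in *. rmin_facts. lra. }
      exists d. split; [exact hd|]. intros y' hy'.
      unfold F. eapply Rle_lt_trans. apply (@norm_mm X).
      assert (hH : norm (minus (Lf b y' (phi y')) (Lf b y (phi y))) < e / 2).
      { apply Hd1; [lra| unfold Rminus; rewrite Rplus_opp_r, Rabs_R0; lra | apply Rabs_def1; lra |].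
        apply Hd2. apply Rabs_def1; lra. }
      rewrite <- (RInt_Chasles (kk phi b) a y y') by apply (kk_ex phi Hphi).
      rewrite (@minus_plus_l X).
      assert (hG : norm (RInt (kk phi b) y y') <= (y' - y) * (N + 1)).
      { pose proof (@RInt_approx X (kk phi b) y y' _ (kk phi b y) 1 ltac:(lra)
          (RInt_correct _ _ _ (kk_ex phi Hphi b y y'))) as HA.
        assert (HA' : norm (minus (RInt (kk phi b) y y') (scal (y' - y) (kk phi b y))) <= 1 * (y' - y)).
        { apply HA. intros t ht. apply Rlt_le, Hd3. apply Rabs_def1; lra. }
        eapply Rle_trans; [apply (norm_le_plus _ (scal (y' - y) (kk phi b y)))|].
        eapply Rle_trans; [apply Rplus_le_compat; [apply (@norm_scal R_AbsRing X)|exact HA']|].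
        unfold abs; simpl. rewrite Rabs_right by lra. fold N. lra. }
      assert ((y' - y) * (N + 1) < e / 2).
      { apply Rlt_le_trans with (e / (2 * (N + 1)) * (N + 1)).
        apply Rmult_lt_compat_r; lra. right. field. lra. }
      apply Rlt_le_trans with (e/2 + e/2); [apply Rplus_lt_le_compat; [exact hH|lra]|lra].
    - intros s hs e he.
      destruct (linear_norm _ (Llin b s ltac:(lra))) as [M [hM HM]].
      destruct (near phi Hphi s (e / (2 * M)) ltac:(apply Rdiv_lt_0_compat; lra)) as [dN [hdN HdN]].
      destruct (kk_cont phi Hphi b s (e / 2) ltac:(lra)) as [dK [hdK HdK]].
      exists (Rmin dN dK). split; [apply Rmin_pos; lra|]. intros k hk hak.
      assert (h1 : Rmin dN dK <= dN) by apply Rmin_l. assert (h2 : Rmin dN dK <= dK) by apply Rmin_r.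
      set (c := Lf b s (gfun phi s)).
      unfold F. rewrite (@mm_split X). eapply Rle_trans. apply (@norm_minus_via X _ _ (scal k c)).
      rewrite <- (Lcoc b s (s - k) (phi (s - k))) by lra.
      rewrite <- (@lin_minus X X _ (Llin b s ltac:(lra))).
      pose proof (incr phi Hphi (s - k) s ltac:(lra)) as HI.
      pose proof (@RInt_approx X _ (s - k) s _ (gfun phi s) (e / (2 * M)) ltac:(lra) HI) as HA.
      replace (s - (s - k)) with k in HA by ring.
      assert (HA' : norm (minus (minus (phi s) (Lf s (s - k) (phi (s - k)))) (scal k (gfun phi s)))
                     <= e / (2 * M) * k).
      { apply HA. intros t ht. apply (HdN k t); lra. }
      assert (hHp : norm (minus (Lf b s (minus (phi s) (Lf s (s - k) (phi (s - k))))) (scal k c)) <= e / 2 * k).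
      { unfold c. rewrite <- (linear_scal _ (Llin b s ltac:(lra))).
        rewrite <- (@lin_minus X X _ (Llin b s ltac:(lra))).
        eapply Rle_trans; [apply HM|].
        apply Rle_trans with (M * (e / (2 * M) * k)); [apply Rmult_le_compat_l; [lra|exact HA']|].
        right. field. lra. }
      rewrite <- (RInt_Chasles (kk phi b) a (s - k) s) by apply (kk_ex phi Hphi).
      rewrite (@minus_plus_l X).
      assert (hGp : norm (minus (RInt (kk phi b) (s - k) s) (scal k c)) <= e / 2 * k).
      { pose proof (@RInt_approx X (kk phi b) (s - k) s _ (kk phi b s) (e / 2) ltac:(lra)
          (RInt_correct _ _ _ (kk_ex phi Hphi b (s - k) s))) as HB.
        replace (s - (s - k)) with k in HB by ring.
        assert (Hc : kk phi b s = c) by (unfold kk, c; rewrite Rmin_left by lra; reflexivity).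
        rewrite Hc in HB. apply HB. intros t ht. rewrite <- Hc. apply Rlt_le, HdK.
        apply Rabs_def1; lra. }
      apply Rle_trans with (e / 2 * k + e / 2 * k); [apply Rplus_le_compat; assumption | right; field]. }
  unfold F in HF. rewrite RInt_point, Lid in HF.
  rewrite (@minus_zero_r X) in HF.
  assert (HR : RInt (kk phi b) a b = minus (phi b) (Lf b a (phi a))).
  { rewrite HF. symmetry. apply (@minus_minus_self X). }
  eapply is_RInt_ext; [| rewrite <- HR; apply RInt_correct, (kk_ex phi Hphi)].
  intros x hx. rewrite Rmin_left in hx by lra. rewrite Rmax_right in hx by lra.
  unfold kk. rewrite Rmin_left by lra. reflexivity.
Qed.

Context (Q : R -> X -> X) (D nu alpha : R)
  (HDich : nonuniform_exp_dichotomy Lf Q (fun s => D * exp (nu * Rabs s)) alpha).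

Lemma Qlin t : is_linear (Q t).
Proof. destruct HDich as [Qp _]. exact (proj1 (Qp t)). Qed.

Lemma Plin a b : a < b -> is_linear (fun y => Lf a b (Q b y)).
Proof.
  intro hab.
  destruct HDich as [Qp [Qcomm [Qinv [_ [K1 [_ [_ [_ Est2]]]]]]]].
  destruct HL as [Llin _].
  destruct (Qinv b a ltac:(lra)) as [B1 [B2 B3]].
  assert (key : forall u y, Q a u = u -> Lf b a u = Q b y -> Lf a b (Q b y) = u).
  { intros u y h1 h2. rewrite <- h2, <- h1. rewrite B1. reflexivity. }
  split.
  - intros y1 y2. apply key.
    + rewrite (linear_plus _ (Qlin a)), B2, B2. reflexivity.
    + rewrite (linear_plus _ (Llin b a ltac:(lra))), B3, B3.
      rewrite (linear_plus _ (Qlin b)). reflexivity.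
  - intros k y. apply key.
    + rewrite (linear_scal _ (Qlin a)), B2. reflexivity.
    + rewrite (linear_scal _ (Llin b a ltac:(lra))), B3.
      rewrite (linear_scal _ (Qlin b)). reflexivity.
  - exists (D * exp (nu * Rabs b) * exp (alpha * (a - b))). split.
    + pose proof (K1 b). pose proof (exp_pos (alpha * (a - b))).
      apply Rmult_lt_0_compat; lra.
    + intro y. apply Est2. exact hab.
Qed.

Lemma QI (phi : R -> X) (Hphi : global_solution Sf phi) t s : t < s ->
  is_RInt (fun tau => Lf t tau (Q tau (gfun phi tau))) t s
    (minus (Lf t s (Q s (phi s))) (Q t (phi t))).
Proof.
  intro hts.
  pose proof (variation phi Hphi t s ltac:(lra)) as HV.
  pose proof (is_RInt_lin _ (Plin t s hts) _ _ _ _ HV) as H. simpl in H.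
  destruct HDich as [Qp [Qcomm [Qinv _]]].
  destruct HL as [Llin [_ [Lcoc _]]].
  rewrite (@lin_minus X X _ (Plin t s hts)) in H.
  destruct (Qinv s t ltac:(lra)) as [B1 [B2 B3]].
  rewrite (Qcomm s t) in H by lra. rewrite B1 in H.
  eapply is_RInt_ext; [|exact H].
  intros tau htau. rewrite Rmin_left in htau by lra. rewrite Rmax_right in htau by lra.
  destruct (Qinv tau t ltac:(lra)) as [C1 [C2 C3]].
  set (w := Lf t tau (Q tau (gfun phi tau))).
  assert (Lf s t w = Lf s tau (Q tau (gfun phi tau))).
  { rewrite <- (Lcoc s tau t w) by lra. unfold w. rewrite C3. reflexivity. }
  rewrite Qcomm by lra. rewrite <- H0. unfold w. rewrite <- C2. rewrite B1. rewrite C2. reflexivity.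
Qed.

Lemma PI (phi : R -> X) (Hphi : global_solution Sf phi) a t : a <= t ->
  is_RInt (fun tau => Lf t tau (minus (gfun phi tau) (Q tau (gfun phi tau)))) a t
    (minus (minus (phi t) (Q t (phi t))) (Lf t a (minus (phi a) (Q a (phi a))))).
Proof.
  intro hat.
  pose proof (variation phi Hphi a t hat) as HV.
  pose proof (is_RInt_lin _ (Qlin t) _ _ _ _ HV) as HQ.
  pose proof (is_RInt_minus _ _ _ _ _ _ HV HQ) as H.
  destruct HDich as [Qp [Qcomm _]].
  destruct HL as [Llin _].
  rewrite (@lin_minus X X _ (Qlin t)) in H.
  rewrite (Qcomm t a) in H by lra.
  rewrite (@mm_split X) in H.
  rewrite <- (@lin_minus X X _ (Llin t a hat)) in H.
  eapply is_RInt_ext; [|exact H].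
  intros tau htau. rewrite Rmin_left in htau by lra. rewrite Rmax_right in htau by lra.
  simpl. rewrite (Qcomm t tau) by lra. rewrite <- (@lin_minus X X _ (Llin t tau ltac:(lra))).
  reflexivity.
Qed.

Definition E1 (phi : R -> X) t a := Lf t a (minus (phi a) (Q a (phi a))).
Definition E2 (phi : R -> X) t b := Lf t b (Q b (phi b)).

Lemma finite_repr (phi : R -> X) (Hphi : global_solution Sf phi) a t b : a < t < b ->
  is_RInt (fun tau => green Lf Q t tau (gfun phi tau)) a b
    (minus (minus (phi t) (E1 phi t a)) (E2 phi t b)).
Proof.
  intro h.
  pose proof (PI phi Hphi a t ltac:(lra)) as HP.
  pose proof (is_RInt_opp _ _ _ _ (QI phi Hphi t b ltac:(lra))) as HQ.
  assert (HP' : is_RInt (fun tau => green Lf Q t tau (gfun phi tau)) a t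
    (minus (minus (phi t) (Q t (phi t))) (Lf t a (minus (phi a) (Q a (phi a)))))).
  { eapply is_RInt_ext; [|exact HP].
    intros tau htau. rewrite Rmin_left in htau by lra. rewrite Rmax_right in htau by lra.
    unfold green. destruct (Rle_dec tau t); [reflexivity|lra]. }
  assert (HQ' : is_RInt (fun tau => green Lf Q t tau (gfun phi tau)) t b
    (opp (minus (Lf t b (Q b (phi b))) (Q t (phi t))))).
  { eapply is_RInt_ext; [|exact HQ].
    intros tau htau. rewrite Rmin_left in htau by lra. rewrite Rmax_right in htau by lra.
    unfold green. destruct (Rle_dec tau t); [lra|reflexivity]. }
  pose proof (is_RInt_Chasles _ _ _ _ _ _ HP' HQ') as H.
  rewrite (@split_sum X) in H. exact H.
Qed.

Lemma E1_bound (phi : R -> X) t a : a <= t ->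
  norm (E1 phi t a) <= D * exp (nu * Rabs a) * exp (- alpha * (t - a)) * norm (phi a).
Proof.
  intro h. destruct HDich as [_ [_ [_ [_ [_ [_ [_ [Est1 _]]]]]]]]. apply Est1. exact h.
Qed.

Lemma E2_bound (phi : R -> X) t b : t < b ->
  norm (E2 phi t b) <= D * exp (nu * Rabs b) * exp (alpha * (t - b)) * norm (phi b).
Proof.
  intro h. destruct HDich as [_ [_ [_ [_ [_ [_ [_ [_ Est2]]]]]]]]. apply Est2. exact h.
Qed.

Context (HD1 : 1 <= D) (Hnu : 0 <= nu) (Hna : nu < alpha).

Lemma E1_small (phi : R -> X) M (HM : forall tau, norm (phi tau) <= M) t eps : 0 < eps ->
  exists A, forall a, a < A -> a <= t -> norm (E1 phi t a) < eps.
Proof.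
  intro he.
  assert (hM : 0 <= M) by (eapply Rle_trans; [apply (norm_ge_0 (phi 0))|apply (HM 0)]).
  assert (hC : 0 <= D * M * exp (- alpha * t)).
  { pose proof (exp_pos (- alpha * t)). apply Rmult_le_pos; [apply Rmult_le_pos|]; lra. }
  destruct (small_exp _ (alpha - nu) eps ltac:(lra) he hC) as [A' HA'].
  exists (Rmin A' 0). intros a ha hat.
  assert (h1 : Rmin A' 0 <= A') by apply Rmin_l. assert (h2 : Rmin A' 0 <= 0) by apply Rmin_r.
  eapply Rle_lt_trans. apply (E1_bound phi t a hat).
  rewrite Rabs_left by lra.
  assert (Hx : exp (nu * - a) * exp (- alpha * (t - a)) = exp (- alpha * t) * exp ((alpha - nu) * a))
    by (rewrite <- !exp_plus; f_equal; ring).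
  eapply Rle_lt_trans; [|apply (HA' a); lra].
  replace (D * exp (nu * - a) * exp (- alpha * (t - a)) * norm (phi a)) with
    (D * (exp (nu * - a) * exp (- alpha * (t - a))) * norm (phi a)) by ring.
  rewrite Hx.
  pose proof (exp_pos (- alpha * t)). pose proof (exp_pos ((alpha - nu) * a)).
  pose proof (HM a). pose proof (norm_ge_0 (phi a)).
  assert (0 <= exp (- alpha * t) * exp ((alpha - nu) * a)) by (apply Rmult_le_pos; lra).
  replace (D * M * exp (- alpha * t) * exp ((alpha - nu) * a)) with
    (D * (exp (- alpha * t) * exp ((alpha - nu) * a)) * M) by ring.
  apply Rmult_le_compat_l; [apply Rmult_le_pos; lra|]. exact (HM a).
Qed.

Lemma E2_small (phi : R -> X) M (HM : forall tau, norm (phi tau) <= M) t eps : 0 < eps ->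
  exists B, forall b, B < b -> t < b -> norm (E2 phi t b) < eps.
Proof.
  intro he.
  assert (hM : 0 <= M) by (eapply Rle_trans; [apply (norm_ge_0 (phi 0))|apply (HM 0)]).
  assert (hC : 0 <= D * M * exp (alpha * t)).
  { pose proof (exp_pos (alpha * t)). apply Rmult_le_pos; [apply Rmult_le_pos|]; lra. }
  destruct (small_exp _ (alpha - nu) eps ltac:(lra) he hC) as [A' HA'].
  exists (Rmax (- A') 0). intros b hb htb.
  assert (h1 : - A' <= Rmax (- A') 0) by apply Rmax_l. assert (h2 : 0 <= Rmax (- A') 0) by apply Rmax_r.
  eapply Rle_lt_trans. apply (E2_bound phi t b htb).
  rewrite Rabs_right by lra.
  assert (Hx : exp (nu * b) * exp (alpha * (t - b)) = exp (alpha * t) * exp ((alpha - nu) * - b))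
    by (rewrite <- !exp_plus; f_equal; ring).
  eapply Rle_lt_trans; [|apply (HA' (- b)); lra].
  replace (D * exp (nu * b) * exp (alpha * (t - b)) * norm (phi b)) with
    (D * (exp (nu * b) * exp (alpha * (t - b))) * norm (phi b)) by ring.
  rewrite Hx.
  pose proof (exp_pos (alpha * t)). pose proof (exp_pos ((alpha - nu) * - b)).
  assert (0 <= exp (alpha * t) * exp ((alpha - nu) * - b)) by (apply Rmult_le_pos; lra).
  replace (D * M * exp (alpha * t) * exp ((alpha - nu) * - b)) with
    (D * (exp (alpha * t) * exp ((alpha - nu) * - b)) * M) by ring.
  apply Rmult_le_compat_l; [apply Rmult_le_pos; lra|]. exact (HM b).
Qed.

Lemma part_a (phi : R -> X) : bounded_fun phi -> global_solution Sf phi -> forall t,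
  is_RInt_gen (fun tau => green Lf Q t tau (gfun phi tau))
    (Rbar_locally m_infty) (Rbar_locally p_infty) (phi t).
Proof.
  intros [M HM] Hphi t.
  unfold is_RInt_gen. apply filterlimi_locally. intros eps.
  destruct (E1_small phi M HM t (eps / 2) ltac:(pose proof (cond_pos eps); lra)) as [A HA].
  destruct (E2_small phi M HM t (eps / 2) ltac:(pose proof (cond_pos eps); lra)) as [B HB].
  apply Filter_prod with (fun a => a < Rmin A t) (fun b => Rmax B t < b).
  - exists (Rmin A t). intros; assumption.
  - exists (Rmax B t). intros; assumption.
  - intros a b ha hb. simpl.
    assert (h1 : Rmin A t <= A) by apply Rmin_l. assert (h2 : Rmin A t <= t) by apply Rmin_r.
    assert (h3 : B <= Rmax B t) by apply Rmax_l. assert (h4 : t <= Rmax B t) by apply Rmax_r.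
    exists (minus (minus (phi t) (E1 phi t a)) (E2 phi t b)). split.
    + apply finite_repr; [exact Hphi|lra].
    + apply norm_compat1. rewrite (@minus_minus_minus_l X), norm_opp.
      eapply Rle_lt_trans; [apply norm_triangle|].
      pose proof (HA a ltac:(lra) ltac:(lra)). pose proof (HB b ltac:(lra) ltac:(lra)).
      apply Rlt_le_trans with (eps / 2 + eps / 2); [apply Rplus_lt_compat; assumption|lra].
Qed.

Lemma green_lin t tau u v :
  green Lf Q t tau (minus u v) = minus (green Lf Q t tau u) (green Lf Q t tau v).
Proof.
  destruct HL as [Llin _].
  unfold green. destruct (Rle_dec tau t) as [h|h].
  - rewrite (@lin_minus X X _ (Qlin tau)), (@mm_split X).
    apply (@lin_minus X X _ (Llin t tau h)).
  - rewrite (@lin_minus X X _ (Plin t tau ltac:(lra))). apply (@opp_minus_distr X).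
Qed.

Lemma green_bound t tau x :
  norm (green Lf Q t tau x) <= D * exp (nu * Rabs tau) * exp (- alpha * Rabs (t - tau)) * norm x.
Proof.
  destruct HDich as [_ [_ [_ [_ [_ [_ [_ [Est1 Est2]]]]]]]].
  unfold green. destruct (Rle_dec tau t) as [h|h].
  - rewrite (Rabs_right (t - tau)) by lra. apply Est1. exact h.
  - rewrite (@norm_opp R_AbsRing X). rewrite (Rabs_left (t - tau)) by lra.
    replace (- alpha * - (t - tau)) with (alpha * (t - tau)) by ring.
    apply Est2. lra.
Qed.

Lemma step (phi : R -> X) (Hphib : bounded_fun phi) (Hphi : global_solution Sf phi)
  (Hxib : bounded_fun xi) eta eps0
  (Hrho : forall t (x : X), 0 < norm x -> norm x <= eps0 ->
        exp (nu * Rabs t) *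
          norm (minus (minus (f t (plus (xi t) x)) (f t (xi t))) (Df t (xi t) x))
        <= eta * norm x)
  B (hB : 0 <= B) (hBe : B <= eps0) (HB : forall tau, norm (minus (phi tau) (xi tau)) <= B) t :
  0 < eta -> norm (minus (phi t) (xi t)) <= D * eta * B * (2 / alpha).
Proof.
  intro heta.
  destruct HDich as [_ [_ [_ [_ [_ [_ [halpha _]]]]]]].
  apply le_epsilon. intros dl hdl.
  destruct Hphib as [M1 HM1]. destruct Hxib as [M2 HM2].
  destruct (E1_small phi M1 HM1 t (dl / 4) ltac:(lra)) as [A1 HA1].
  destruct (E2_small phi M1 HM1 t (dl / 4) ltac:(lra)) as [B1 HB1].
  destruct (E1_small xi M2 HM2 t (dl / 4) ltac:(lra)) as [A2 HA2].
  destruct (E2_small xi M2 HM2 t (dl / 4) ltac:(lra)) as [B2 HB2].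
  set (a := Rmin (Rmin A1 A2) t - 1). set (b := Rmax (Rmax B1 B2) t + 1).
  assert (ha : a < A1 /\ a < A2 /\ a < t).
  { unfold a. pose proof (Rmin_l (Rmin A1 A2) t). pose proof (Rmin_r (Rmin A1 A2) t).
    pose proof (Rmin_l A1 A2). pose proof (Rmin_r A1 A2). lra. }
  assert (hb : B1 < b /\ B2 < b /\ t < b).
  { unfold b. pose proof (Rmax_l (Rmax B1 B2) t). pose proof (Rmax_r (Rmax B1 B2) t).
    pose proof (Rmax_l B1 B2). pose proof (Rmax_r B1 B2). lra. }
  pose proof (finite_repr phi Hphi a t b ltac:(lra)) as Hp.
  pose proof (finite_repr xi Hxi a t b ltac:(lra)) as Hx.
  pose proof (is_RInt_minus _ _ _ _ _ _ Hp Hx) as HM.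
  destruct (exp_int alpha t a b halpha ltac:(lra)) as [I [HI hI]].
  pose proof (is_RInt_scal _ _ _ (D * eta * B) _ HI) as HG.
  assert (hDe : 0 <= D * eta * B) by (apply Rmult_le_pos; [apply Rmult_le_pos|]; lra).
  assert (Hint : norm (minus (minus (minus (phi t) (E1 phi t a)) (E2 phi t b))
                            (minus (minus (xi t) (E1 xi t a)) (E2 xi t b)))
                 <= D * eta * B * (2 / alpha)).
  { eapply Rle_trans. eapply (norm_RInt_le _ _ a b _ _ ltac:(lra)); [| exact HM | exact HG].
    - intros tau htau. simpl. rewrite <- green_lin.
      eapply Rle_trans. apply green_bound.
      set (r := minus (gfun phi tau) (gfun xi tau)).
      assert (Hr : exp (nu * Rabs tau) * norm r <= eta * B).
      { destruct (Req_dec (norm (minus (phi tau) (xi tau))) 0) as [z|nz].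
        - apply norm_eq_zero in z. apply (@eq_of_minus X) in z.
          unfold r, gfun. rewrite z, (@norm_minus_self X). rewrite Rmult_0_r.
          apply Rmult_le_pos; lra.
        - set (x := minus (phi tau) (xi tau)).
          assert (hx : 0 < norm x) by (pose proof (norm_ge_0 x); unfold x in *; lra).
          assert (Hpx : plus (xi tau) x = phi tau).
          { unfold x. rewrite plus_comm. apply (@plus_minus_cancel X). }
          assert (Hrx : r = minus (minus (f tau (plus (xi tau) x)) (f tau (xi tau))) (Df tau (xi tau) x)).
          { rewrite Hpx. unfold r, gfun, x. rewrite (@mm_split X).
            rewrite <- (@lin_minus X X _ (Df_lin tau (xi tau))). reflexivity. }
          rewrite Hrx. eapply Rle_trans. apply Hrho. exact hx. apply Rle_trans with B; [apply HB|lra].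
          apply Rmult_le_compat_l; [lra|]. apply HB. }
      pose proof (exp_pos (- alpha * Rabs (t - tau))).
      unfold scal; simpl; unfold mult; simpl.
      replace (D * exp (nu * Rabs tau) * exp (- alpha * Rabs (t - tau)) * norm r) with
        (D * exp (- alpha * Rabs (t - tau)) * (exp (nu * Rabs tau) * norm r)) by ring.
      replace (D * eta * B * exp (- alpha * Rabs (t - tau))) with
        (D * exp (- alpha * Rabs (t - tau)) * (eta * B)) by ring.
      apply Rmult_le_compat_l; [apply Rmult_le_pos; lra|exact Hr].
    - unfold scal; simpl; unfold mult; simpl. apply Rmult_le_compat_l; assumption. }
  eapply Rle_trans. apply (norm4 (phi t) (xi t) (minus (minus (phi t) (E1 phi t a)) (E2 phi t b))
     (minus (minus (xi t) (E1 xi t a)) (E2 xi t b))).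
  rewrite !(@minus_minus_minus_l X), !norm_opp.
  pose proof (norm_triangle (E1 phi t a) (E2 phi t b)).
  pose proof (norm_triangle (E1 xi t a) (E2 xi t b)).
  pose proof (HA1 a ltac:(lra) ltac:(lra)). pose proof (HB1 b ltac:(lra) ltac:(lra)).
  pose proof (HA2 a ltac:(lra) ltac:(lra)). pose proof (HB2 b ltac:(lra) ltac:(lra)).
  apply Rle_trans with (D * eta * B * (2 / alpha) + (norm (E1 phi t a) + norm (E2 phi t b)) + (norm (E1 xi t a) + norm (E2 xi t b))); [apply Rplus_le_compat; [apply Rplus_le_compat|]; [exact Hint|exact H|exact H0] | lra].
Qed.

Lemma part_b : bounded_fun xi ->
   (forall eta, 0 < eta -> exists eps0, 0 < eps0 /\
      forall t (x : X), 0 < norm x -> norm x <= eps0 ->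
        exp (nu * Rabs t) *
          norm (minus (minus (f t (plus (xi t) x)) (f t (xi t))) (Df t (xi t) x))
        <= eta * norm x) ->
   exists eps, 0 < eps /\
     forall phi : R -> X, bounded_fun phi -> global_solution Sf phi ->
       (forall t, norm (minus (phi t) (xi t)) <= eps) ->
       forall t, phi t = xi t.
Proof.
  intros Hxib Hrho.
  assert (halpha : 0 < alpha) by lra.
  set (eta := alpha / (4 * D)).
  assert (heta : 0 < eta) by (unfold eta; apply Rdiv_lt_0_compat; lra).
  destruct (Hrho eta heta) as [eps0 [he0 H0]].
  exists eps0. split; [exact he0|]. intros phi Hphib Hphi Hclose.
  assert (Hn : forall n, forall tau, norm (minus (phi tau) (xi tau)) <= eps0 * (1/2) ^ n).
  { induction n as [|n IH]; intro tau.
    - simpl. rewrite Rmult_1_r. apply Hclose.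
    - assert (hp : 0 < (1/2) ^ n) by (apply pow_lt; lra).
      assert (hp1 : (1/2) ^ n <= 1).
      { clear. induction n; simpl; [lra|]. assert (0 <= (1/2)^n) by (apply pow_le; lra). nra. }
      eapply Rle_trans. apply (step phi Hphib Hphi Hxib eta eps0 H0 (eps0 * (1/2)^n));
        [apply Rmult_le_pos; lra | nra | exact IH | exact heta].
      right. unfold eta. simpl. field. lra. }
  intro t. apply (@eq_of_minus X). apply norm_eq_zero.
  apply Rle_antisym; [|apply norm_ge_0].
  apply le_epsilon. intros e he. rewrite Rplus_0_l.
  assert (h12 : Rabs (1/2) < 1) by (rewrite Rabs_right; lra).
  destruct (pow_lt_1_zero (1/2) h12 (e / eps0) ltac:(apply Rdiv_lt_0_compat; lra)) as [N HN].
  specialize (HN N (le_n N)). rewrite Rabs_right in HN by (apply Rle_ge, pow_le; lra).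
  eapply Rle_trans. apply (Hn N t).
  apply Rle_trans with (eps0 * (e / eps0)). apply Rmult_le_compat_l; lra.
  right. field. lra.
Qed.

End Core.

Theorem mainTheorem10
  (X : CompleteNormedModule R_AbsRing)
  (T : R -> R -> X -> X) (f : R -> X -> X) (Df : R -> X -> X -> X)
  (Sf : R -> R -> X -> X) (xi : R -> X) (Lf : R -> R -> X -> X)
  (Q : R -> X -> X) (D nu alpha : R) :
  lin_evolution_process T ->
  (* f continuous *)
  (forall t x, continuous (fun p : R * X => f (fst p) (snd p)) (t, x)) ->
  (* f differentiable in x with derivative Df t x *)
  (forall t x, filterdiff (f t) (locally x) (Df t x)) ->
  (* (t,x) |-> D_x f(t,x) continuous in operator norm *)
  (forall t x eps, 0 < eps -> exists delta, 0 < delta /\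
     forall t' x', Rabs (t' - t) < delta -> norm (minus x' x) < delta ->
       forall h, norm (minus (Df t' x' h) (Df t x h)) <= eps * norm h) ->
  mild_process T f Sf ->
  global_solution Sf xi ->
  lin_evolution_process Lf ->
  linearized_eq T Df xi Lf ->
  1 <= D -> 0 <= nu -> nu < alpha ->
  nonuniform_exp_dichotomy Lf Q (fun s => D * exp (nu * Rabs s)) alpha ->
  (* (a) *)
  (forall phi : R -> X, bounded_fun phi -> global_solution Sf phi ->
     forall t,
       is_RInt_gen
         (fun tau => green Lf Q t tau
                       (minus (f tau (phi tau)) (Df tau (xi tau) (phi tau))))
         (Rbar_locally m_infty) (Rbar_locally p_infty) (phi t)) /\
  (* (b) *)
  (bounded_fun xi ->
   (forall eta, 0 < eta -> exists eps0, 0 < eps0 /\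
      forall t (x : X), 0 < norm x -> norm x <= eps0 ->
        exp (nu * Rabs t) *
          norm (minus (minus (f t (plus (xi t) x)) (f t (xi t))) (Df t (xi t) x))
        <= eta * norm x) ->
   exists eps, 0 < eps /\
     forall phi : R -> X, bounded_fun phi -> global_solution Sf phi ->
       (forall t, norm (minus (phi t) (xi t)) <= eps) ->
       forall t, phi t = xi t).
Proof.
  intros HT Hfc Hfd HDc Hmild Hxi HL HLeq HD1 Hnu Hna HDich.
  split.
  - intros phi Hb Hphi t.
    exact (part_a T f Df Sf xi Lf HT Hfc Hfd HDc Hmild Hxi HL HLeq Q D nu alpha HDich HD1 Hna phi Hb Hphi t).
  - intros Hxib Hrho.
    exact (part_b T f Df Sf xi Lf HT Hfc Hfd HDc Hmild Hxi HL HLeq Q D nu alpha HDich HD1 Hnu Hna Hxib Hrho).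
Qed.
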